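(* Let $c\in[0,1/2]$, $\mu\in[-1+c,1-c]^n$, $d\in\mathbb{N}$, $\beta>0$, and let $f:\{-1,1\}^n\to\{-1,1\}$ be computed by a decision tree of size $s$. Then $$\sum_{S\subseteq N:\ |\hat f(S,\mu)|\geq\beta \text{ and } |S|\leq d}\hat f^2(S,\mu)\;\geq\; 1-\Big(4(1-c/2)^d s+2^{d+2}\beta\Big).$$
   Context: $N=\{1,\ldots,n\}$. For $\mu\in[-1,1]^n$, $\mathcal{D}_\mu$ is the product distribution on $\{-1,1\}^n$ with independent coordinates and $\mathbb{E}_{x\sim\mathcal{D}_\mu}[x_i]=\mu_i$. Define $z_i(x,\mu)=(x_i-\mu_i)/\sqrt{1-\mu_i^2}$, $z_S(x,\mu)=\prod_{i\in S}z_i(x,\mu)$, and $\hat f(S,\mu)=\mathbb{E}_{x\sim\mathcal{D}_\mu}[f(x)z_S(x,\mu)]$. A decision tree over $\{-1,1\}^n$ is a rooted binary tree whose internal nodes are labeled by indices $i\in N$, with two outgoing edges labeled $1$ and $-1$, and leaves labeled $\pm1$, no index appearing twice on any root-to-leaf path; on input $x$ one follows at a node labeled $i$ the edge labeled $x_i$ and outputs the label of the leaf reached. Its size is its number of leaves. *)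

(* Defs.v *)
From HB Require Import structures.
From mathcomp Require Import all_boot all_order all_algebra.
From mathcomp Require Import reals.
Set Implicit Arguments. Unset Strict Implicit. Unset Printing Implicit Defensive.
Import Order.TTheory GRing.Theory Num.Theory.
Local Open Scope ring_scope.

(* A point of {-1,1}^n is encoded as x : {ffun 'I_n -> bool},
   with true standing for 1 and false for -1. *)
Definition sgn {R : realType} (b : bool) : R := if b then 1 else -1.

Section Defs.
Variable R : realType.
Variable n : nat.

Definition cube := {ffun 'I_n -> bool}.

Definition Dmu (mu : 'I_n -> R) (x : cube) : R :=
  \prod_(i < n) ((1 + sgn (x i) * mu i) / 2).

Definition zi (x : cube) (mu : 'I_n -> R) (i : 'I_n) : R :=
  (sgn (x i) - mu i) / Num.sqrt (1 - mu i ^+ 2).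

Definition zS (x : cube) (mu : 'I_n -> R) (S : {set 'I_n}) : R :=
  \prod_(i in S) zi x mu i.

Definition fhat (f : cube -> R) (S : {set 'I_n}) (mu : 'I_n -> R) : R :=
  \sum_(x : cube) Dmu mu x * (f x * zS x mu S).

Inductive dtree : Type :=
| Leaf of bool
| Node of 'I_n & dtree & dtree.

Fixpoint dt_eval (t : dtree) (x : cube) : R :=
  match t with
  | Leaf b => sgn b
  | Node i t1 tm1 => if x i then dt_eval t1 x else dt_eval tm1 x
  end.

Fixpoint dt_wf_aux (seen : seq 'I_n) (t : dtree) : bool :=
  match t with
  | Leaf _ => true
  | Node i t1 tm1 => (i \notin seen) && dt_wf_aux (i :: seen) t1
                     && dt_wf_aux (i :: seen) tm1
  end.

Definition dt_wf (t : dtree) : bool := dt_wf_aux [::] t.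

Fixpoint dt_size (t : dtree) : nat :=
  match t with
  | Leaf _ => 1
  | Node _ t1 tm1 => dt_size t1 + dt_size tm1
  end.

End Defs.

(* Main.v *)
Require Import Defs.
From HB Require Import structures.
From mathcomp Require Import all_boot all_order all_algebra.
From mathcomp Require Import reals.
From mathcomp Require Import ring lra.
Set Implicit Arguments. Unset Strict Implicit. Unset Printing Implicit Defensive.
Import Order.TTheory GRing.Theory Num.Theory.
Local Open Scope ring_scope.

Lemma bnd (R : realType) (s m a1 a0 : R) : 0 <= s -> -1 < m -> m < 1 ->
  `|s / 2 * (a1 - a0)| + `|((1 + m) * a1 + (1 - m) * a0) / 2| <=
  (s + 1 + m) / 2 * `|a1| + (s + 1 - m) / 2 * `|a0|.
Proof.
move=> hs m1 m2.
have h1 : `|s / 2 * (a1 - a0)| <= s / 2 * (`|a1| + `|a0|).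
  rewrite normrM ger0_norm; last by apply: divr_ge0.
  apply: ler_wpM2l; first by apply: divr_ge0.
  exact: ler_normB.
have h2 : `|((1 + m) * a1 + (1 - m) * a0) / 2| <= ((1 + m) * `|a1| + (1 - m) * `|a0|) / 2.
  rewrite normrM (ger0_norm (x := 2^-1)); last by rewrite invr_ge0.
  suff hX : `|(1 + m) * a1 + (1 - m) * a0| <= (1 + m) * `|a1| + (1 - m) * `|a0| by nra.
  apply: (le_trans (ler_normD _ _)); rewrite !normrM (ger0_norm (x:=1+m)) ?(ger0_norm (x:=1-m)); lra.
apply: (le_trans (lerD h1 h2)); rewrite le_eqVlt; apply/orP; left; apply/eqP; by field.
Qed.

Section Fourier.
Variable R : realType.
Variable n : nat.
Variable mu : 'I_n -> R.
Hypothesis hmu : forall i, -1 < mu i < 1.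

Definition sig i : R := Num.sqrt (1 - mu i ^+ 2).
Definition pb i (b : bool) : R := (1 + sgn b * mu i) / 2.
Definition zb i (b : bool) : R := (sgn b - mu i) / sig i.

Lemma one_mu2 i : 0 < 1 - mu i ^+ 2.
Proof. have /andP[h1 h2] := hmu i. nra. Qed.

Lemma sig_gt0 i : 0 < sig i.
Proof. by rewrite /sig sqrtr_gt0 one_mu2. Qed.

Lemma sig2 i : sig i ^+ 2 = 1 - mu i ^+ 2.
Proof. by rewrite /sig sqr_sqrtr // ltW // one_mu2. Qed.

Lemma sig_le1 i : sig i <= 1.
Proof. have h := sig2 i; have h0 := sig_gt0 i. nra. Qed.

Lemma pb_gt0 i b : 0 < pb i b.
Proof. have /andP[h1 h2] := hmu i. rewrite /pb; case: b => /=; lra. Qed.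

Lemma pz0 i : pb i true + pb i false = 1.
Proof. rewrite /pb /=. lra. Qed.

Lemma pz1 i : pb i true * zb i true + pb i false * zb i false = 0.
Proof.
have hs := sig_gt0 i. rewrite /pb /zb /=. field. by rewrite gt_eqF.
Qed.

Lemma pz2 i : pb i true * zb i true ^+ 2 + pb i false * zb i false ^+ 2 = 1.
Proof.
have hs := sig_gt0 i. have h2 := sig2 i. have h1 := one_mu2 i.
rewrite /pb /zb /= !expr_div_n h2. field. by rewrite gt_eqF.
Qed.

Lemma kern_eq i b : 1 + zb i b * zb i b = (pb i b)^-1.
Proof.
have hs := sig_gt0 i. have h2 := sig2 i. have h1 := one_mu2 i.
have /andP[m1 m2] := hmu i.
rewrite /pb /zb -expr2 !expr_div_n h2.
have e : 1 - mu i ^+ 2 = (1 - mu i) * (1 + mu i) by ring.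
rewrite e invf_div.
case: b => /=; field; apply/andP; split; rewrite gt_eqF //; lra.
Qed.

Lemma kern_neq i b : 1 + zb i b * zb i (~~ b) = 0.
Proof.
have hs := sig_gt0 i. have h2 := sig2 i.
have e : zb i b * zb i (~~ b) = - (1 - mu i ^+ 2) / sig i ^+ 2.
  rewrite /zb; case: b => /=; field; by rewrite gt_eqF.
rewrite e h2. field. by rewrite gt_eqF // one_mu2.
Qed.


Lemma prod_sum (F : 'I_n -> bool -> R) :
  \sum_(x : cube n) \prod_i F i (x i) = \prod_i (F i true + F i false).
Proof.
rewrite -bigA_distr_bigA /=. apply: eq_bigr => i _. by rewrite big_bool.
Qed.

Lemma DmuE x : Dmu mu x = \prod_i pb i (x i).
Proof. by []. Qed.

Lemma ziE x i : zi x mu i = zb i (x i).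
Proof. by []. Qed.

Lemma sum_Dmu : \sum_(x : cube n) Dmu mu x = 1.
Proof.
rewrite (eq_bigr (fun x : cube n => \prod_i pb i (x i))) // prod_sum.
by apply: big1 => i _; rewrite pz0.
Qed.

Lemma Dmu_gt0 x : 0 < Dmu mu x.
Proof. rewrite DmuE; apply: prodr_gt0 => i _; exact: pb_gt0. Qed.

Lemma zS_mk x S : zS x mu S = \prod_i (if i \in S then zb i (x i) else 1).
Proof. by rewrite /zS big_mkcond. Qed.

Lemma ortho S T :
  \sum_(x : cube n) Dmu mu x * (zS x mu S * zS x mu T) = if S == T then 1 else 0.
Proof.
rewrite (eq_bigr (fun x : cube n => \prod_i (pb i (x i) *
   ((if i \in S then zb i (x i) else 1) * (if i \in T then zb i (x i) else 1))))); last first.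
  by move=> x _; rewrite DmuE !zS_mk -!big_split.
rewrite (prod_sum (fun i b => pb i b *
   ((if i \in S then zb i b else 1) * (if i \in T then zb i b else 1)))).
have [->|neST] := eqVneq S T.
  apply: big1 => i _; case: (i \in T); rewrite ?mulr1 ?pz0 //.
  by rewrite -!expr2 pz2.
have [i hi] : exists i, (i \in S) != (i \in T).
  apply/existsP; apply: contraR neST => /existsPn h; apply/eqP/setP => j.
  by have := h j; rewrite negbK => /eqP.
rewrite (bigD1 i) //=.
move: hi; case: (i \in S); case: (i \in T) => //= _;
  by rewrite ?mulr1 ?mul1r pz1 mul0r.
Qed.

Lemma sum_subsets (a : 'I_n -> R) :
  \sum_(S : {set 'I_n}) \prod_(i in S) a i = \prod_i (1 + a i).
Proof.
rewrite (eq_bigr (fun S : {set 'I_n} => \prod_i (if i \in S then a i else 1))); last first.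
  by move=> S _; rewrite big_mkcond.
rewrite (eq_bigr (fun i => (fun b : bool => if b then a i else 1) true +
           (fun b : bool => if b then a i else 1) false)); last by move=> i _; rewrite addrC.
rewrite -(prod_sum (fun i (b : bool) => if b then a i else 1)).
rewrite (reindex (fun f : cube n => [set i | f i])) /=; last first.
  apply: onW_bij. exists (fun S : {set 'I_n} => [ffun i => i \in S]).
    by move=> f; apply/ffunP => i; rewrite ffunE inE.
  by move=> S; apply/setP => i; rewrite inE ffunE.
by apply: eq_bigr => f _; apply: eq_bigr => i _; rewrite inE.
Qed.

Lemma kernel x y :
  \sum_(S : {set 'I_n}) zS x mu S * zS y mu S = if x == y then (Dmu mu x)^-1 else 0.
Proof.
rewrite (eq_bigr (fun S : {set 'I_n} => \prod_(i in S) (zb i (x i) * zb i (y i)))); last first.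
  by move=> S _; rewrite /zS -big_split.
rewrite sum_subsets.
have [->|nxy] := eqVneq x y.
  rewrite DmuE -prodfV; apply: eq_bigr => i _; exact: kern_eq.
have [i hi] : exists i, x i != y i.
  apply/existsP; apply: contraR nxy => /existsPn h; apply/eqP/ffunP => j.
  by have := h j; rewrite negbK => /eqP.
rewrite (bigD1 i) //=.
have -> : y i = ~~ x i by move: hi; case: (x i); case: (y i).
by rewrite kern_neq mul0r.
Qed.

Lemma parseval (F : cube n -> R) :
  \sum_(S : {set 'I_n}) fhat F S mu ^+ 2 = \sum_(x : cube n) Dmu mu x * F x ^+ 2.
Proof.
rewrite (eq_bigr (fun S : {set 'I_n} => \sum_(x : cube n) \sum_(y : cube n)
   (Dmu mu x * F x * Dmu mu y * F y) * (zS x mu S * zS y mu S))); last first.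
  move=> S _; rewrite expr2 /fhat mulr_suml; apply: eq_bigr => x _.
  rewrite mulr_sumr; apply: eq_bigr => y _. ring.
rewrite exchange_big /=; apply: eq_bigr => x _.
rewrite exchange_big /=.
rewrite (eq_bigr (fun y : cube n => (Dmu mu x * F x * Dmu mu y * F y) *
     (if x == y then (Dmu mu x)^-1 else 0))); last first.
  by move=> y _; rewrite -mulr_sumr kernel.
rewrite (bigD1 x) //= eqxx big1; last first.
  by move=> y /negbTE; rewrite eq_sym => ->; rewrite mulr0.
have := Dmu_gt0 x => hD.
rewrite addr0. field. by rewrite gt_eqF.
Qed.

Lemma fhat_rep (F : cube n -> R) (a : {set 'I_n} -> R) :
  (forall x, F x = \sum_(S : {set 'I_n}) a S * zS x mu S) ->
  forall T, fhat F T mu = a T.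
Proof.
move=> hF T; rewrite /fhat.
rewrite (eq_bigr (fun x : cube n => \sum_(S : {set 'I_n}) a S *
    (Dmu mu x * (zS x mu S * zS x mu T)))); last first.
  move=> x _; rewrite hF mulr_suml mulr_sumr; apply: eq_bigr => S _. ring.
rewrite exchange_big /=.
rewrite (eq_bigr (fun S : {set 'I_n} => a S * (if S == T then 1 else 0))); last first.
  by move=> S _; rewrite -mulr_sumr ortho.
rewrite (bigD1 T) //= eqxx mulr1 big1 ?addr0 //.
by move=> S /negbTE ->; rewrite mulr0.
Qed.

Lemma fhat_sub (F G : cube n -> R) T :
  fhat (fun x => F x - G x) T mu = fhat F T mu - fhat G T mu.
Proof.
rewrite /fhat -sumrB; apply: eq_bigr => x _; ring.
Qed.


Fixpoint ev (L : bool -> R) (Tr : R) (k : nat) (t : dtree n) (x : cube n) : R :=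
  match k with
  | 0 => Tr
  | k'.+1 => match t with
             | Leaf b => L b
             | Node i t1 t0 => if x i then ev L Tr k' t1 x else ev L Tr k' t0 x
             end
  end.

Fixpoint co (L : bool -> R) (Tr : R) (k : nat) (t : dtree n) (S : {set 'I_n}) : R :=
  match k with
  | 0 => if S == set0 then Tr else 0
  | k'.+1 => match t with
             | Leaf b => if S == set0 then L b else 0
             | Node i t1 t0 =>
               if i \in S then sig i / 2 * (co L Tr k' t1 (S :\ i) - co L Tr k' t0 (S :\ i))
               else ((1 + mu i) * co L Tr k' t1 S + (1 - mu i) * co L Tr k' t0 S) / 2
             end
  end.

Lemma co_supp L Tr k t seen : dt_wf_aux seen t ->
  forall S : {set 'I_n}, has (fun j => j \in S) seen -> co L Tr k t S = 0.
Proof.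
elim: k t seen => [|k IH] t seen /= wf S hS.
  case: eqP => // eS; move: hS; rewrite eS; by move/hasP => [j _]; rewrite inE.
case: t wf => [b|i t1 t0] /=.
  move=> _; case: eqP => // eS; move: hS; rewrite eS; by move/hasP => [j _]; rewrite inE.
move=> /andP[/andP[ni w1] w0].
have [iS|iS] := boolP (i \in S).
  rewrite (IH t1 (i :: seen)) // ?(IH t0 (i :: seen)) ?subrr ?mulr0 //;
  move: hS => /hasP [j js jS]; apply/hasP; exists j; rewrite ?inE ?js ?orbT //;
  rewrite jS andbT; apply: contraNneq ni => <-; done.
rewrite (IH t1 (i :: seen)) // ?(IH t0 (i :: seen)) ?mulr0 ?addr0 ?mul0r //=;
  by rewrite hS orbT.
Qed.

Lemma co_deg L Tr k t (S : {set 'I_n}) : (k < #|S|)%N -> co L Tr k t S = 0.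
Proof.
elim: k t S => [|k IH] t S /= hk.
  case: eqP => // eS; by move: hk; rewrite eS cards0.
case: t => [b|i t1 t0] /=.
  case: eqP => // eS; by move: hk; rewrite eS cards0.
have [iS|iS] := boolP (i \in S).
  rewrite !IH ?subrr ?mulr0 //; move: hk; rewrite (cardsD1 i S) iS; by [].
rewrite !IH ?mulr0 ?addr0 ?mul0r //; exact: ltnW.
Qed.

Definition tog (i : 'I_n) (S : {set 'I_n}) := if i \in S then S :\ i else i |: S.

Lemma tog_inv i : involutive (tog i).
Proof.
move=> S; rewrite /tog; have [iS|iS] := boolP (i \in S).
  by rewrite !inE eqxx /= setD1K.
by rewrite !inE eqxx /= setU1K.
Qed.

Lemma tog_inj i : injective (tog i).
Proof. exact: inv_inj (@tog_inv i). Qed.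

Lemma split_sum i (F : {set 'I_n} -> R) :
  \sum_(S : {set 'I_n}) F S =
  \sum_(S : {set 'I_n} | i \notin S) (F (i |: S) + F S).
Proof.
rewrite (bigID (fun S : {set 'I_n} => i \in S)) /= (reindex_inj (@tog_inj i)) /= big_split /=.
congr (_ + _); apply: eq_big => S; rewrite /tog;
  case: (boolP (i \in S)) => h; rewrite ?inE ?eqxx ?h //=.
Qed.


Lemma sum_if0 v x :
  \sum_(S : {set 'I_n}) (if S == set0 then v else 0) * zS x mu S = v.
Proof.
rewrite (bigD1 set0) //= eqxx big1 ?addr0; last first.
  by move=> S /negbTE ->; rewrite mul0r.
by rewrite /zS big_set0 mulr1.
Qed.

Lemma full_sum i (a : {set 'I_n} -> R) x :
  (forall S : {set 'I_n}, i \in S -> a S = 0) ->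
  \sum_(S : {set 'I_n} | i \notin S) a S * zS x mu S =
  \sum_(S : {set 'I_n}) a S * zS x mu S.
Proof.
move=> ha; rewrite [RHS](bigID (fun S : {set 'I_n} => i \in S)) /= [X in _ = X + _]big1 ?add0r //.
by move=> S iS; rewrite ha // mul0r.
Qed.

Lemma co_rep L Tr k t seen : dt_wf_aux seen t ->
  forall x, ev L Tr k t x = \sum_(S : {set 'I_n}) co L Tr k t S * zS x mu S.
Proof.
elim: k t seen => [|k IH] t seen /= wf x.
  by rewrite sum_if0.
case: t wf => [b|i t1 t0] /=.
  by move=> _; rewrite sum_if0.
move=> /andP[/andP[ni w1] w0].
rewrite (split_sum i).
set c1 := sig i / 2 * zb i (x i) + (1 + mu i) / 2.
set c0 := (1 - mu i) / 2 - sig i / 2 * zb i (x i).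
rewrite (eq_bigr (fun S : {set 'I_n} => c1 * (co L Tr k t1 S * zS x mu S) +
     c0 * (co L Tr k t0 S * zS x mu S))); last first.
  move=> S iS; rewrite setU11 setU1K // (negbTE iS).
  rewrite /zS big_setU1 //= -/(zS x mu S) /c1 /c0 ziE. ring.
rewrite big_split /= -!mulr_sumr !(full_sum (i:=i)); first last.
- move=> S iS; apply: (co_supp _ _ _ w1) => /=; by rewrite iS.
- move=> S iS; apply: (co_supp _ _ _ w0) => /=; by rewrite iS.
rewrite -(IH _ _ w1) -(IH _ _ w0) /c1 /c0.
have hs := sig_gt0 i.
rewrite /zb; case: (x i) => /=; field; by rewrite gt_eqF.
Qed.

Lemma co_L1 L Tr k t : (forall b, `|L b| <= 1) -> `|Tr| <= 1 ->
  \sum_(S : {set 'I_n}) `|co L Tr k t S| <= 2 ^+ k.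
Proof.
move=> hL hT; elim: k t => [|k IH] t /=.
  rewrite (bigD1 set0) //= eqxx big1 ?addr0 //.
  by move=> S /negbTE ->; rewrite normr0.
case: t => [b|i t1 t0] /=.
  rewrite (bigD1 set0) //= eqxx big1 ?addr0; last first.
    by move=> S /negbTE ->; rewrite normr0.
  apply: (le_trans (hL b)); apply: exprn_ege1; lra.
rewrite (split_sum i).
have hs := sig_gt0 i; have hs1 := sig_le1 i; have /andP[m1 m2] := hmu i.
set A1 := fun S => `|co L Tr k t1 S|.
set A0 := fun S => `|co L Tr k t0 S|.
apply: (le_trans (y := \sum_(S : {set 'I_n}) ((sig i + 1 + mu i) / 2 * A1 S
        + (sig i + 1 - mu i) / 2 * A0 S))).
  rewrite [X in _ <= X](bigID (fun S : {set 'I_n} => i \notin S)) /=.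
  rewrite -[X in X <= _]addr0; apply: lerD; last first.
    apply: sumr_ge0 => S _; apply: addr_ge0; apply: mulr_ge0; rewrite /A1 /A0 //; lra.
  apply: ler_sum => S iS; rewrite setU11 setU1K // (negbTE iS) /A1 /A0.
  apply: bnd => //; exact: ltW.
rewrite big_split /= -!mulr_sumr.
apply: (le_trans (lerD (ler_wpM2l _ (IH t1)) (ler_wpM2l _ (IH t0)))); try lra.
have h2k : (0:R) < 2 ^+ k by apply: exprn_gt0; lra.
rewrite exprS. nra.
Qed.

Lemma co_mean k t (r : R) : 0 <= r -> (forall i, (1 + mu i) / 2 <= r /\ (1 - mu i) / 2 <= r) ->
  co (fun _ => 0) 1 k t set0 <= (dt_size t)%:R * r ^+ k.
Proof.
move=> r0 hr; elim: k t => [|k IH] t /=.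
  rewrite eqxx expr0 mulr1 ler1n. elim: t => //= i t1 h1 t0 h0. by rewrite addn_gt0 h1.
case: t => [b|i t1 t0] /=.
  rewrite eqxx; apply: mulr_ge0 => //; exact: exprn_ge0.
rewrite in_set0 natrD.
have /andP[m1 m2] := hmu i. have [r1 r2] := hr i.
have A1 := IH t1. have A0 := IH t0.
have X1 : 0 <= (dt_size t1)%:R * r ^+ k by apply: mulr_ge0 => //; exact: exprn_ge0.
have X0 : 0 <= (dt_size t0)%:R * r ^+ k by apply: mulr_ge0 => //; exact: exprn_ge0.
set a1 := co _ _ k t1 set0 in A1 *. set a0 := co _ _ k t0 set0 in A0 *.
set y1 := (dt_size t1)%:R * r ^+ k in A1 X1 *. set y0 := (dt_size t0)%:R * r ^+ k in A0 X0 *.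
have -> : ((dt_size t1)%:R + (dt_size t0)%:R) * r ^+ k.+1 = r * y1 + r * y0.
  rewrite /y1 /y0 exprS; ring.
have h1 : (1 + mu i) * a1 <= (1 + mu i) * y1 by apply: ler_wpM2l => //; lra.
have h0 : (1 - mu i) * a0 <= (1 - mu i) * y0 by apply: ler_wpM2l => //; lra.
nra.
Qed.

End Fourier.

Lemma dt_size_gt0 n (t : dtree n) : (0 < dt_size t)%N.
Proof. elim: t => //= i t1 h1 t0 h0. by rewrite addn_gt0 h1. Qed.

Lemma dt_eval_sgn (R : realType) n (t : dtree n) x : exists b, dt_eval R t x = sgn b.
Proof. elim: t => [b|i t1 h1 t0 h0] /=; first by exists b. by case: (x i). Qed.

Lemma ev_diff (R : realType) n k (t : dtree n) x :
  (dt_eval R t x - ev (@sgn R) 1 k t x) ^+ 2 <= 4 * ev (fun _ => 0) 1 k t x.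
Proof.
elim: k t => [|k IH] t /=.
  have [b ->] := dt_eval_sgn R t x; case: b => /=; lra.
case: t => [b|i t1 t0] /=.
  by rewrite subrr expr0n mulr0.
by case: (x i).
Qed.



Theorem lemma4 (R : realType) (n : nat) (c : R) (mu : 'I_n -> R) (d : nat)
  (beta : R) (f : cube n -> R) (s : nat) (T : dtree n) :
  0 <= c -> c <= 1 / 2 ->
  (forall i, -1 + c <= mu i <= 1 - c) ->
  0 < beta ->
  dt_wf T -> dt_size T = s ->
  (forall x, f x = dt_eval R T x) ->
  \sum_(S : {set 'I_n} | (beta <= `|fhat f S mu|) && (#|S| <= d)%N)
     fhat f S mu ^+ 2
  >= 1 - (4 * (1 - c / 2) ^+ d * s%:R + 2 ^+ (d + 2) * beta).
Proof.
move=> c0 c1 hmuc hb wf hs hf.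
have s1 : (1 <= s)%N by rewrite -hs dt_size_gt0.
have s1R : (1 : R) <= s%:R by rewrite ler1n.
have h2d : (0 : R) < 2 ^+ d by apply: exprn_gt0; lra.
have e2 : (2 : R) ^+ (d + 2) = 2 ^+ d * (2 * 2) by rewrite exprD expr2.
have sq0 : 0 <= \sum_(S : {set 'I_n} | (beta <= `|fhat f S mu|) && (#|S| <= d)%N)
     fhat f S mu ^+ 2 by apply: sumr_ge0 => S _; exact: sqr_ge0.
have [cz|cpos] := eqVneq c 0.
  rewrite cz mul0r subr0 expr1n mulr1.
  nra.
have hmu : forall i, -1 < mu i < 1.
  move=> i; have /andP[m1 m2] := hmuc i.
  have cp : 0 < c by rewrite lt_neqAle eq_sym cpos c0.
  apply/andP; split; lra.
set q := (1 - c / 2) ^+ d.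
have q0 : 0 <= q by apply: exprn_ge0; lra.
pose g := ev (@sgn R) 1 d T.
pose L0 := fun _ : bool => (0 : R).
pose b := ev L0 1 d T.
pose a := co mu (@sgn R) 1 d T.
have hg : forall S, fhat g S mu = a S := fhat_rep hmu (co_rep hmu (@sgn R) 1 d wf).
have Hf : \sum_(S : {set 'I_n}) fhat f S mu ^+ 2 = 1.
  rewrite parseval // -(sum_Dmu mu); apply: eq_bigr => x _.
  rewrite hf; have [bb ->] := dt_eval_sgn R T x; case: bb => /=; rewrite ?expr1n ?sqrrN ?expr1n mulr1 //.
have Hbm : \sum_(x : cube n) Dmu mu x * b x = co mu L0 1 d T set0.
  rewrite -(fhat_rep hmu (co_rep hmu L0 1 d wf) set0) /fhat.
  by apply: eq_bigr => x _; rewrite /zS big_set0 mulr1.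
have Hbb : co mu L0 1 d T set0 <= s%:R * q.
  rewrite -hs; apply: co_mean => // [|i]; first lra.
  have /andP[m1 m2] := hmuc i; split; lra.
have Hh : \sum_(S : {set 'I_n}) (fhat f S mu - a S) ^+ 2 <= 4 * (s%:R * q).
  rewrite (eq_bigr (fun S : {set 'I_n} => fhat (fun x => f x - g x) S mu ^+ 2)); last first.
    by move=> S _; rewrite fhat_sub hg.
  rewrite parseval //.
  apply: (le_trans (y := \sum_(x : cube n) Dmu mu x * (4 * b x))).
    apply: ler_sum => x _; apply: ler_wpM2l; first exact: ltW (Dmu_gt0 hmu x).
    rewrite hf; exact: ev_diff.
  rewrite (eq_bigr (fun x : cube n => 4 * (Dmu mu x * b x))); last by move=> x _; ring.
  rewrite -mulr_sumr Hbm; lra.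
have HL1 : \sum_(S : {set 'I_n}) `|a S| <= 2 ^+ d.
  apply: co_L1 => //; last by rewrite normr1.
  by case; rewrite /= ?normrN normr1.
have Hdrop : forall S : {set 'I_n}, ~~ ((beta <= `|fhat f S mu|) && (#|S| <= d)%N) ->
    fhat f S mu ^+ 2 <= (fhat f S mu - a S) ^+ 2 + 2 * beta * `|a S|.
  move=> S; rewrite negb_and => /orP[hlt|hdeg].
    rewrite -ltNge in hlt.
    have hfa : fhat f S mu * a S <= beta * `|a S|.
      apply: (le_trans (ler_norm _)); rewrite normrM; apply: ler_wpM2r => //; exact: ltW.
    have := sqr_ge0 (a S). nra.
  rewrite -ltnNge in hdeg.
  rewrite /a co_deg // subr0 normr0 mulr0 addr0 //.
have Hsplit := Hf.
rewrite (bigID (fun S : {set 'I_n} => (beta <= `|fhat f S mu|) && (#|S| <= d)%N)) /= in Hsplit.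
have Hd : \sum_(S : {set 'I_n} | ~~ ((beta <= `|fhat f S mu|) && (#|S| <= d)%N)) fhat f S mu ^+ 2
    <= 4 * (s%:R * q) + 2 * beta * 2 ^+ d.
  apply: (le_trans (ler_sum _ Hdrop)).
  apply: (le_trans (y := \sum_(S : {set 'I_n}) ((fhat f S mu - a S) ^+ 2 + 2 * beta * `|a S|))).
    rewrite [X in _ <= X](bigID (fun S : {set 'I_n} => (beta <= `|fhat f S mu|) && (#|S| <= d)%N)) /=.
    rewrite lerDr; apply: sumr_ge0 => S _; apply: addr_ge0; first exact: sqr_ge0.
    apply: mulr_ge0 => //; lra.
  rewrite big_split /= -mulr_sumr.
  apply: lerD => //; apply: ler_wpM2l => //; lra.
rewrite /q in Hd *.
nra.
Qed.
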